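(* Let $\phi:\mathbb R_{\ge0}\times X\to X$ be a continuous semiflow on a metric space $(X,d)$, let $K\subset X$ be compact and $\alpha\ge0$. Assume there is $L>0$ such that $d(\phi_t(x),\phi_t(y))\le L\,d(x,y)$ for all $x,y\in\bigcup_{s\ge0}\phi_s(K)$ and all $t\in[0,1]$. Then \[ h_{\mathrm{est}}(\alpha,K;\phi)=\ln(2)\cdot h_{\mathrm{est}}(\alpha,K;\phi_1). \]
   Context: For a continuous-time system $\phi$, a set $S\subset K$ is $(T,\varepsilon,\alpha,K)$-spanning ($T>0$ real) if for each $x\in K$ there is $y\in S$ with $d(\phi_t(x),\phi_t(y))<\varepsilon e^{-\alpha t}$ for all $t\in[0,T]$, and $h_{\mathrm{est}}(\alpha,K;\phi)=\lim_{\varepsilon\downarrow0}\limsup_{T\to\infty}\frac1T\ln s^*_{\mathrm{est}}(T,\varepsilon,\alpha,K;\phi)$, with $s^*_{\mathrm{est}}$ the minimal cardinality of such a set (natural logarithm). For the discrete-time system generated by the time-1 map $\phi_1$ (iterates $\phi_1^t=\phi_t$, $t\in\mathbb Z_{\ge0}$), the same definition is used with $T\in\mathbb Z_{>0}$, $t\in\{0,1,\ldots,T\}$, and $\log_2$ in place of $\ln$, giving $h_{\mathrm{est}}(\alpha,K;\phi_1)$. *)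

(* Defs.v *)
From Stdlib Require List.
From HB Require Import structures.
From mathcomp Require Import all_boot all_order all_algebra.
From mathcomp Require Import all_classical all_reals all_analysis.
Set Implicit Arguments. Unset Strict Implicit. Unset Printing Implicit Defensive.
Import Order.TTheory GRing.Theory Num.Theory.
Import numFieldNormedType.Exports.
Local Open Scope classical_set_scope.
Local Open Scope ring_scope.

Section Defs.
Variables (R : realType) (X : Type).

Definition is_metric (d : X -> X -> R) : Prop :=
  [/\ forall x y, 0 <= d x y,
      forall x y, d x y = 0 <-> x = y,
      forall x y, d x y = d y x &
      forall x y z, d x z <= d x y + d y z].

Definition d_open (d : X -> X -> R) (U : set X) : Prop :=
  forall x, U x -> exists2 e : R, 0 < e & forall y, d x y < e -> U y.

Definition d_compact (d : X -> X -> R) (K : set X) : Prop :=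
  forall (I : Type) (U : I -> set X),
    (forall i, d_open d (U i)) -> K `<=` \bigcup_i U i ->
    exists s : seq I, forall x, K x -> exists i, Stdlib.Lists.List.In i s /\ U i x.

(* continuous semiflow phi : R_{>=0} x X -> X (values for t < 0 irrelevant) *)
Definition cont_semiflow (d : X -> X -> R) (phi : R -> X -> X) : Prop :=
  [/\ forall x, phi 0 x = x,
      forall s t x, 0 <= s -> 0 <= t -> phi (s + t) x = phi s (phi t x) &
      forall t x, 0 <= t -> forall e : R, 0 < e ->
        exists2 del : R, 0 < del & forall s y, 0 <= s -> `|s - t| < del ->
          d x y < del -> d (phi t x) (phi s y) < e].

Definition spanning_ct (d : X -> X -> R) (phi : R -> X -> X)
    (T eps alpha : R) (K : set X) (S : seq X) : Prop :=
  (forall y, Stdlib.Lists.List.In y S -> K y) /\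
  forall x, K x -> exists2 y, Stdlib.Lists.List.In y S &
    forall t : R, 0 <= t <= T -> d (phi t x) (phi t y) < eps * expR (- (alpha * t)).

Definition spanning_dt (d : X -> X -> R) (f : X -> X)
    (T : nat) (eps alpha : R) (K : set X) (S : seq X) : Prop :=
  (forall y, Stdlib.Lists.List.In y S -> K y) /\
  forall x, K x -> exists2 y, Stdlib.Lists.List.In y S &
    forall t : nat, (t <= T)%N ->
      d (iter t f x) (iter t f y) < eps * expR (- (alpha * t%:R)).

Local Open Scope ereal_scope.

(* minimal cardinality (+oo if no finite spanning set exists) *)
Definition sest_ct d phi T eps alpha K : \bar R :=
  ereal_inf [set (size S)%:R%:E | S in spanning_ct d phi T eps alpha K].

Definition sest_dt d f T eps alpha K : \bar R :=
  ereal_inf [set (size S)%:R%:E | S in spanning_dt d f T eps alpha K].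

End Defs.

Section Logs.
Variable R : realType.
Local Open Scope ereal_scope.

Definition eln (x : \bar R) : \bar R :=
  match x with
  | EFin r => if r == 0%R then -oo else (ln r)%:E
  | +oo => +oo
  | -oo => -oo
  end.

Definition elog2 (x : \bar R) : \bar R := ((ln 2)^-1)%:E * eln x.
End Logs.

Local Open Scope ereal_scope.

Definition hest_ct (R : realType) (X : Type) (d : X -> X -> R) (phi : R -> X -> X)
    (alpha : R) (K : set X) : \bar R :=
  lim ((fun eps : R =>
          limf_esup (fun T : R => (T^-1)%:E * eln (sest_ct d phi T eps alpha K))
                    (pinfty_nbhs R)) @ 0%R^'+).

Definition hest_dt (R : realType) (X : Type) (d : X -> X -> R) (f : X -> X)
    (alpha : R) (K : set X) : \bar R :=
  lim ((fun eps : R =>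
          limn_esup (fun T : nat => (T%:R^-1)%:E * elog2 (sest_dt d f T eps alpha K)))
       @ 0%R^'+).

(* Main.v *)
Require Import Defs.
From HB Require Import structures.
From mathcomp Require Import all_boot all_order all_algebra.
From mathcomp Require Import all_classical all_reals all_analysis.
From mathcomp Require Import ring lra.
Import Order.TTheory GRing.Theory Num.Theory.
Import numFieldNormedType.Exports.
Local Open Scope classical_set_scope.
Local Open Scope ring_scope.

Section Gen.
Local Open Scope ereal_scope.
Variable R : realType.

Lemma limf_esup_le (T1 T2 : choiceType) (X1 : filteredType T1) (X2 : filteredType T2)
  (f : X1 -> \bar R) (g : X2 -> \bar R) F G :
  (forall W, G W -> exists2 V, F V & forall x, V x -> exists2 y, W y & f x <= g y) ->
  limf_esup f F <= limf_esup g G.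
Proof.
move=> H; apply: le_ereal_inf_tmp => _ [W GW <-].
have [V FV HV] := H W GW.
apply: (le_trans (ereal_inf_lbound _)); first by exists V.
apply: ge_ereal_sup => _ [x Vx <-]; have [y Wy le] := HV x Vx.
by apply: (le_trans le); apply: ereal_sup_ubound; exists y.
Qed.

Lemma limf_esupZ (T1 : choiceType) (X1 : filteredType T1)
  (f : X1 -> \bar R) F (k : R) : (0 < k)%R ->
  limf_esup (fun x => k%:E * f x) F = k%:E * limf_esup f F.
Proof.
move=> k0; rewrite /limf_esup -ereal_inf_pZl //; congr ereal_inf.
rewrite image_comp; apply: eq_imagel => V _ /=.
by rewrite -ereal_sup_pZl // image_comp.
Qed.

Lemma ereal_inf_nat (T : Type) (P : set T) (f : T -> nat) :
  let s := ereal_inf [set ((f x)%:R : R)%:E | x in P] in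
  0 <= s /\ (s = 0 \/ 1 <= s).
Proof.
move=> s.
have s0 : 0 <= s by apply: le_ereal_inf_tmp => _ [x _ <-]; rewrite lee_fin ler0n.
split => //; case: (leP 1 s) => [|s1]; first by right.
left; have [_ [x Px <-]] := ereal_inf_lt s1.
rewrite lte_fin (_ : 1%R = 1%:R)// ltr_nat ltnS leqn0 => /eqP fx0.
apply/eqP; rewrite eq_le s0 andbT.
by apply: ereal_inf_lbound; exists x => //; rewrite fx0.
Qed.

Lemma eln_le (x y : \bar R) : 0 <= x -> x <= y -> eln x <= eln y.
Proof.
case: x => [r||] //; case: y => [r'||] //=; rewrite ?lee_fin.
- move=> r0 rr'; case: eqP => [_|/eqP rn0]; first by rewrite leNye.
  have r'0 : (0 < r')%R by apply: lt_le_trans rr'; rewrite lt0r rn0.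
  by rewrite gt_eqF // lee_fin ler_ln // posrE lt0r rn0.
- by move=> _ _; case: eqP => _; rewrite leey.
Qed.

Lemma eln_nat (s : \bar R) : s = 0 \/ 1 <= s -> eln s = -oo \/ 0 <= eln s.
Proof.
case=> [->|]; first by left; rewrite /= eqxx.
case: s => [r||] //= r1; right; last by [].
have r1' : (1 <= r)%R by rewrite -lee_fin.
by rewrite gt_eqF ?(lt_le_trans ltr01 r1') // lee_fin ln_ge0.
Qed.

Lemma mul_le_nat (x : \bar R) (p q : R) : x = -oo \/ 0 <= x -> (0 < p)%R -> (p <= q)%R ->
  p%:E * x <= q%:E * x.
Proof.
case=> [->|x0] p0 pq; first by rewrite mulrNy gtr0_sg // mul1e leNye.
by apply: lee_wpmul2r.
Qed.

End Gen.

Section Aux.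
Variables (R : realType) (X : Type) (d : X -> X -> R) (phi : R -> X -> X)
  (K : set X) (alpha : R).

Lemma iter_phi (H0 : forall x, phi 0 x = x)
  (Hs : forall s t x, 0 <= s -> 0 <= t -> phi (s + t) x = phi s (phi t x)) n x :
  iter n (phi 1) x = phi n%:R x.
Proof.
elim: n => [|n IH] /=; first by rewrite H0.
by rewrite IH -Hs // ?ler0n // -natr1 addrC.
Qed.

Lemma span_ct_dt (H0 : forall x, phi 0 x = x)
  (Hs : forall s t x, 0 <= s -> 0 <= t -> phi (s + t) x = phi s (phi t x))
  T e n S : n%:R <= T -> spanning_ct d phi T e alpha K S ->
  spanning_dt d (phi 1) n e alpha K S.
Proof.
move=> nT [HS Hx]; split => // x Kx; have [y Sy Hy] := Hx x Kx.
exists y => // t tn; rewrite !iter_phi //; apply: Hy.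
by rewrite ler0n /= (le_trans _ nT) // ler_nat.
Qed.

Lemma span_dt_ct (H0 : forall x, phi 0 x = x)
  (Hs : forall s t x, 0 <= s -> 0 <= t -> phi (s + t) x = phi s (phi t x))
  L (L0 : 0 < L) (HL : forall x y, (\bigcup_(s in [set s : R | 0 <= s]) (phi s @` K)) x ->
                 (\bigcup_(s in [set s : R | 0 <= s]) (phi s @` K)) y ->
       forall t : R, 0 <= t <= 1 -> d (phi t x) (phi t y) <= L * d x y)
  (a0 : 0 <= alpha) T e n S : 0 < e -> T < n.+1%:R ->
  spanning_dt d (phi 1) n (expR (- alpha) / L * e) alpha K S ->
  spanning_ct d phi T e alpha K S.
Proof.
move=> e0 Tn [HS Hx]; split => // x Kx; have [y Sy Hy] := Hx x Kx.
exists y => // t /andP[t0 tT].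
set k := Num.truncn t.
have [kt tk] := andP (truncn_itv t0).
have kn : (k <= n)%N by rewrite truncn_le_nat (le_lt_trans tT Tn).
have -> : t = (t - k%:R) + k%:R by rewrite subrK.
have tk0 : 0 <= t - k%:R by rewrite subr_ge0.
rewrite (Hs _ _ x tk0 (ler0n _ _)) (Hs _ _ y tk0 (ler0n _ _)).
have Hk := Hy k kn; rewrite !iter_phi // in Hk.
have Ku z : K z -> (\bigcup_(s in [set s : R | 0 <= s]) (phi s @` K)) (phi k%:R z).
  by move=> Kz; exists k%:R; [rewrite /= ler0n | exists z].
apply: (le_lt_trans (HL _ _ (Ku _ Kx) (Ku _ (HS _ Sy)) _ _)).
  by rewrite tk0 /= lerBlDr addrC natr1 ltW.
apply: (lt_le_trans (y := L * (expR (- alpha) / L * e * expR (- (alpha * k%:R))))).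
  by rewrite ltr_pM2l.
rewrite subrK.
have -> : L * (expR (- alpha) / L * e * expR (- (alpha * k%:R))) =
  e * expR (- (alpha * (k%:R + 1))).
  rewrite mulrDr mulr1 opprD expRD; field; exact: lt0r_neq0.
rewrite ler_pM2l // ler_expR lerN2.
by rewrite ler_wpM2l // natr1 ltW.
Qed.


Lemma span_dt_mono f n (e1 e2 : R) S : e1 <= e2 -> spanning_dt d f n e1 alpha K S ->
  spanning_dt d f n e2 alpha K S.
Proof.
move=> e12 [HS Hx]; split => // x Kx; have [y Sy Hy] := Hx x Kx.
exists y => // t tn; apply: (lt_le_trans (Hy t tn)).
by rewrite ler_wpM2r // expR_ge0.
Qed.

Lemma span_ct_mono T (e1 e2 : R) S : e1 <= e2 -> spanning_ct d phi T e1 alpha K S ->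
  spanning_ct d phi T e2 alpha K S.
Proof.
move=> e12 [HS Hx]; split => // x Kx; have [y Sy Hy] := Hx x Kx.
exists y => // t tn; apply: (lt_le_trans (Hy t tn)).
by rewrite ler_wpM2r // expR_ge0.
Qed.

End Aux.

Section Main.
Local Open Scope ereal_scope.
Variables (R : realType) (X : Type) (d : X -> X -> R) (phi : R -> X -> X)
  (K : set X) (alpha : R).
Variables (H0 : forall x, phi 0 x = x)
  (Hs : forall s t x, (0 <= s)%R -> (0 <= t)%R -> phi (s + t) x = phi s (phi t x))
  (L : R) (L0 : (0 < L)%R)
  (HL : forall x y, (\bigcup_(s in [set s : R | (0 <= s)%R]) (phi s @` K)) x ->
                 (\bigcup_(s in [set s : R | (0 <= s)%R]) (phi s @` K)) y ->
       forall t : R, (0 <= t <= 1)%R -> (d (phi t x) (phi t y) <= L * d x y)%R)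
  (a0 : (0 <= alpha)%R).

Definition A (e : R) := limf_esup (fun T : R => (T^-1)%:E * eln (sest_ct d phi T e alpha K))
                    (pinfty_nbhs R).
Definition B (e : R) := limn_esup (fun T : nat => (T%:R^-1)%:E * elog2 (sest_dt d (phi 1) T e alpha K)).
Definition G (e : R) := limn_esup (fun T : nat => (T%:R^-1)%:E * eln (sest_dt d (phi 1) T e alpha K)).

Lemma ln2_gt0 : (0 < ln (2 : R))%R.
Proof. by apply: ln_gt0; rewrite ltr1n. Qed.

Lemma GB e : G e = (ln 2)%:E * B e.
Proof.
rewrite /G /B /limn_esup -limf_esupZ ?ln2_gt0 //; congr limf_esup.
apply/funext => n /=; rewrite /elog2 [RHS]muleCA; congr (_ * _).
rewrite muleA -EFinM mulfV ?mul1e //.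
by rewrite gt_eqF // ln2_gt0.
Qed.

Lemma sct_ge0 T e : 0 <= sest_ct d phi T e alpha K.
Proof. by have [] := @ereal_inf_nat R _ (spanning_ct d phi T e alpha K) (@size X). Qed.
Lemma sdt_ge0 n e : 0 <= sest_dt d (phi 1) n e alpha K.
Proof. by have [] := @ereal_inf_nat R _ (spanning_dt d (phi 1) n e alpha K) (@size X). Qed.

Lemma GA e : G e <= A e.
Proof.
apply: limf_esup_le => W [M [Mr HM]].
exists [set n | ((Num.truncn M).+1 <= n)%N]; first by exists (Num.truncn M).+1.
move=> n /= Nn; exists n%:R.
  apply: HM; apply: (lt_le_trans (real_truncnS_gt Mr)); by rewrite ler_nat.
apply: lee_wpmul2l; first by rewrite lee_fin invr_ge0 ler0n.
apply: eln_le; first exact: sdt_ge0.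
apply: ereal_inf_le_tmp => _ [S HS <-]; exists S => //.
exact: (@span_ct_dt R X d phi K alpha H0 Hs n%:R e n S (lexx _) HS).
Qed.

Lemma AG e : (0 < e)%R -> A e <= G (expR (- alpha) / L * e).
Proof.
move=> e0; apply: limf_esup_le => W [N _ HN].
exists [set T : R | N%:R + 1 < T]%R.
  by exists (N%:R + 1)%R; split => //; rewrite realE addr_ge0 ?ler0n.
move=> T /= NT; have T0 : (0 <= T)%R by apply: le_trans (ltW NT); rewrite addr_ge0 ?ler0n.
have [nT Tn] := andP (truncn_itv T0).
set n := Num.truncn T in nT Tn.
have n1 : (1 <= n)%N by rewrite truncn_ge_nat // (le_trans _ (ltW NT)) // lerDr ler0n.
exists n.
  apply: HN; rewrite /= truncn_ge_nat //; apply: le_trans (ltW NT); by rewrite lerDl.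
have Tpos : (0 < T)%R by apply: lt_le_trans nT; rewrite ltr0n.
apply: (le_trans (y := (T^-1)%:E * eln (sest_dt d (phi 1) n (expR (- alpha) / L * e) alpha K))).
  apply: lee_wpmul2l; first by rewrite lee_fin invr_ge0.
  apply: eln_le; first exact: sct_ge0.
  apply: ereal_inf_le_tmp => _ [S HS <-]; exists S => //.
  exact: (@span_dt_ct R X d phi K alpha H0 Hs L L0 HL a0 T e n S e0 Tn HS).
apply: mul_le_nat.
  by apply: eln_nat; have [] := @ereal_inf_nat R _ (spanning_dt d (phi 1) n (expR (- alpha) / L * e) alpha K) (@size X).
  by rewrite invr_gt0.
by rewrite lef_pV2 // posrE ltr0n.
Qed.

Lemma Amono e1 e2 : (e1 <= e2)%R -> A e2 <= A e1.
Proof.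
move=> e12; apply: limf_esup_le => W [M [Mr HM]].
exists [set x : R | `|M| < x]%R.
  by exists `|M|%R; split => //; rewrite realE normr_ge0.
move=> x /= Mx; exists x; first by apply: HM; apply: le_lt_trans Mx; exact: real_ler_norm.
apply: lee_wpmul2l.
  by rewrite lee_fin invr_ge0 ltW // (le_lt_trans _ Mx).
apply: eln_le; first exact: sct_ge0.
apply: ereal_inf_le_tmp => _ [S HS <-]; exists S => //.
by eapply span_ct_mono; [exact: e12 | exact: HS].
Qed.

Lemma Bmono e1 e2 : (e1 <= e2)%R -> B e2 <= B e1.
Proof.
move=> e12; apply: limf_esup_le => W FW; exists W => // x Wx; exists x => //.
apply: lee_wpmul2l; first by rewrite lee_fin invr_ge0 ler0n.
apply: lee_wpmul2l; first by rewrite lee_fin invr_ge0 ltW // ln2_gt0.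
apply: eln_le; first exact: sdt_ge0.
apply: ereal_inf_le_tmp => _ [S HS <-]; exists S => //.
by eapply span_dt_mono; [exact: e12 | exact: HS].
Qed.

Lemma final_eq : hest_ct d phi alpha K = (ln 2)%:E * hest_dt d (phi 1) alpha K.
Proof.
set I := [set` Interval (BRight (0%R : R)) (BInfty _ false)].
have Ipos e : I e -> (0 < e)%R by rewrite /I /= in_itv /= andbT.
have posI e : (0 < e)%R -> I e by rewrite /I /= in_itv /= andbT.
have cA : A x @[x --> 0%R^'+] --> ereal_sup (A @` I).
  apply: nonincreasing_at_right_cvge => //.
  by move=> x y _ _ xy; exact: Amono.
have cB : B x @[x --> 0%R^'+] --> ereal_sup (B @` I).
  apply: nonincreasing_at_right_cvge => //.
  by move=> x y _ _ xy; exact: Bmono.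
have -> : hest_ct d phi alpha K = ereal_sup (A @` I).
  by apply: (cvg_lim (@ereal_hausdorff R)); exact: cA.
have -> : hest_dt d (phi 1) alpha K = ereal_sup (B @` I).
  by apply: (cvg_lim (@ereal_hausdorff R)); exact: cB.
rewrite -ereal_sup_pZl ?ln2_gt0 // image_comp.
rewrite (_ : [eta *%E (ln 2)%:E] \o B = G); last by apply/funext => e; rewrite /= GB.
have c0 : (0 < expR (- alpha) / L)%R by rewrite divr_gt0 // expR_gt0.
apply/eqP; rewrite eq_le; apply/andP; split.
- apply: ge_ereal_sup => _ [e Ie <-]; apply: le_ereal_sup_tmp.
  exists (G (expR (- alpha) / L * e)%R); last exact/AG/Ipos.
  by exists (expR (- alpha) / L * e)%R => //; apply/posI/mulr_gt0 => //; exact: Ipos.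
- apply: ge_ereal_sup => _ [e Ie <-]; apply: le_ereal_sup_tmp.
  by exists (A e); [exists e | exact: GA].
Qed.

End Main.

Theorem mainTheorem3 (R : realType) (X : Type) (d : X -> X -> R)
    (phi : R -> X -> X) (K : set X) (alpha : R) :
  is_metric d -> cont_semiflow d phi -> d_compact d K -> 0 <= alpha ->
  (exists2 L : R, 0 < L &
     forall x y, (\bigcup_(s in [set s : R | 0 <= s]) (phi s @` K)) x ->
                 (\bigcup_(s in [set s : R | 0 <= s]) (phi s @` K)) y ->
       forall t : R, 0 <= t <= 1 -> d (phi t x) (phi t y) <= L * d x y) ->
  hest_ct d phi alpha K = ((ln (2 : R))%:E * hest_dt d (phi 1%R) alpha K)%E.
Proof.
move=> _ [H0 Hs _] _ a0 [L L0 HL].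
exact: (@final_eq R X d phi K alpha H0 Hs L L0 HL a0).
Qed.
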